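(* Let $\dot P$ be a diverse colored poset and let $n$ be a positive integer. Then $$2n\le \tilde{R}(\dot P,Q_n)\le h(P)\,n+\dim_2(P).$$
   Context: A poset is a set with a reflexive, antisymmetric, transitive relation; its elements are called vertices. $Q_N$ denotes the Boolean lattice of all subsets of an $N$-element set ordered by inclusion. A colored poset $\dot P=(P,c_P)$ is a poset $P$ together with a coloring $c_P\colon P\to\{\text{blue},\text{red}\}$. A (induced) copy of a poset $P$ in a poset $Q$ is the image of an injective map $\phi\colon P\to Q$ with $X\le_P Y$ iff $\phi(X)\le_Q\phi(Y)$. Given a coloring of $Q$, a copy of the colored poset $\dot P$ is an induced copy of $P$ in which each vertex has the same color as the corresponding vertex of $\dot P$. A monochromatic copy of $Q_n$ is an induced copy of $Q_n$ all of whose vertices have the same color. The poset Erdős–Hajnal number $\tilde{R}(\dot P,Q_n)$ is the minimum $N$ such that every blue/red coloring of the vertices of $Q_N$ contains a copy of $\dot P$ or a monochromatic (all blue or all red) induced copy of $Q_n$. $\dot P$ is diverse if it contains two comparable vertices of distinct colors. The height $h(P)$ is the size of a largest chain in $P$, and the 2-dimension $\dim_2(P)$ is the smallest $N$ such that $Q_N$ contains an induced copy of $P$. *)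

(* Defs.v *)
From mathcomp Require Import all_boot all_order.
Set Implicit Arguments.
Unset Strict Implicit.
Unset Printing Implicit Defensive.
Import Order.TTheory.
Local Open Scope order_scope.

(* A (finite) poset is a [finPOrderType d]; Q_N is [{set 'I_N}] ordered by
   inclusion [\subset].  A blue/red coloring is a map into [bool]
   (true = blue, false = red). *)

Definition induced_copy (d : Order.disp_t) (P : finPOrderType d) (N : nat)
  (phi : P -> {set 'I_N}) : Prop :=
  injective phi /\ forall x y : P, (x <= y) = (phi x \subset phi y).

Definition cube_copy (n N : nat) (phi : {set 'I_n} -> {set 'I_N}) : Prop :=
  injective phi /\ forall A B : {set 'I_n}, (A \subset B) = (phi A \subset phi B).

Definition contains_colored_copy (d : Order.disp_t) (P : finPOrderType d)
  (c : P -> bool) (N : nat) (col : {set 'I_N} -> bool) : Prop :=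
  exists phi : P -> {set 'I_N},
    induced_copy phi /\ forall x : P, col (phi x) = c x.

Definition contains_mono_cube (n N : nat) (col : {set 'I_N} -> bool) : Prop :=
  exists (b : bool) (phi : {set 'I_n} -> {set 'I_N}),
    cube_copy phi /\ forall A : {set 'I_n}, col (phi A) = b.

Definition EH_property (d : Order.disp_t) (P : finPOrderType d)
  (c : P -> bool) (n N : nat) : Prop :=
  forall col : {set 'I_N} -> bool,
    contains_colored_copy c col \/ contains_mono_cube n col.

Definition is_EH_number (d : Order.disp_t) (P : finPOrderType d)
  (c : P -> bool) (n R : nat) : Prop :=
  EH_property c n R /\ forall N, EH_property c n N -> (R <= N)%N.

Definition diverse (d : Order.disp_t) (P : finPOrderType d) (c : P -> bool) : Prop :=
  exists x y : P, ((x <= y) || (y <= x)) /\ c x != c y.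

Definition is_chain (d : Order.disp_t) (P : finPOrderType d) (S : {set P}) : bool :=
  [forall x in S, forall y in S, (x <= y) || (y <= x)].

Definition height (d : Order.disp_t) (P : finPOrderType d) : nat :=
  (\max_(S : {set P} | is_chain S) #|S|)%N.

Definition is_dim2 (d : Order.disp_t) (P : finPOrderType d) (D : nat) : Prop :=
  (exists phi : P -> {set 'I_D}, induced_copy phi) /\
  forall N, (exists phi : P -> {set 'I_N}, induced_copy phi) -> (D <= N)%N.

(* Main.v *)
Require Import Defs.
From mathcomp Require Import all_boot all_order.
From Stdlib Require Import Classical.
Set Implicit Arguments.
Unset Strict Implicit.
Unset Printing Implicit Defensive.
Import Order.TTheory.

Lemma min_exists (Pr : nat -> Prop) M :
  Pr M -> exists R, Pr R /\ forall N, Pr N -> R <= N.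
Proof.
elim: M.+1 {-2}M (ltnSn M) => [M0 //|k IH M0 HM PM].
case: (classic (exists N, Pr N /\ N < M0)) => [[N [PN ltNM]]|H].
  by apply: (IH N) => //; rewrite (leq_trans ltNM).
exists M0; split=> // N PN; rewrite leqNgt; apply/negP=> lt; apply: H.
by exists N.
Qed.

Lemma cube_copy_shift n N (Z : {set 'I_N}) (f : 'I_n -> 'I_N) :
  injective f -> (forall j, f j \notin Z) -> cube_copy (fun A => Z :|: f @: A).
Proof.
move=> finj fZ.
have key: forall A B : {set 'I_n}, (A \subset B) = (Z :|: f @: A \subset Z :|: f @: B).
  move=> A B; apply/idP/idP => [sAB|sAB].
    by apply: setUS; apply: imsetS.
  apply/subsetP=> j jA.
  have: f j \in Z :|: f @: B by apply: (subsetP sAB); rewrite in_setU imset_f ?orbT.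
  by rewrite in_setU (negbTE (fZ j)) /= (mem_imset _ _ finj).
split=> //.
move=> A B eqAB; apply/eqP; rewrite eqEsubset !key eqAB subxx //.
Qed.

Lemma cube_chain n N (phi : {set 'I_n} -> {set 'I_N}) : cube_copy phi ->
  #|phi set0| + n <= #|phi setT|.
Proof.
case=> inj sub.
have H: forall k, k <= n -> #|phi set0| + k <= #|phi [set j : 'I_n | j < k]|.
  elim=> [_|k IH lt].
    by rewrite addn0 subset_leq_card // -sub sub0set.
  have ksub: [set j : 'I_n | j < k] \proper [set j : 'I_n | j < k.+1].
    rewrite properE; apply/andP; split.
      by apply/subsetP=> j; rewrite !inE => /ltnW.
    apply/negP=> /subsetP /(_ (Ordinal lt)); rewrite !inE ltnSn ltnn.
    by move=> /(_ isT).
  have: phi [set j : 'I_n | j < k] \proper phi [set j : 'I_n | j < k.+1].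
    by rewrite properE -!sub -properE.
  move=> /proper_card; rewrite addnS; apply: leq_trans.
  by rewrite ltnS IH // ltnW.
have := H n (leqnn n).
have -> : [set j : 'I_n | j < n] = setT by apply/setP=> j; rewrite !inE ltn_ord.
by [].
Qed.

Lemma lower_bound d (P : finPOrderType d) (c : P -> bool) n N :
  diverse c -> N < 2 * n -> ~ EH_property c n N.
Proof.
case=> x [y [cmp cxy]].
wlog xy: x y cxy {cmp} / (x <= y)%O.
  move=> W; case/orP: cmp => H; first exact: (W x y).
  by apply: (W y x) => //; rewrite eq_sym.
move=> ltN EH.
pose col := fun A : {set 'I_N} => if n <= #|A| then c x else ~~ c x.
case: (EH col) => [[phi [[inj sub] hc]] | [b [phi [cc hb]]]].
- have sxy: phi x \subset phi y by rewrite -sub.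
  move: (hc x) (hc y); rewrite /col.
  have [Hx|Hx] := leqP n #|phi x|.
    rewrite (leq_trans Hx (subset_leq_card sxy)) => _ hy.
    by move: cxy; rewrite -hy eqxx.
  by case: (c x).
- have ch := cube_chain cc.
  have cardT: #|phi setT| <= N by have := max_card (phi setT); rewrite card_ord.
  have := hb set0; have := hb setT; rewrite /col.
  have [H0|H0] := leqP n #|phi set0|.
    move=> _ _.
    have: 2 * n <= N.
      rewrite mul2n -addnn; apply: leq_trans (leq_trans ch cardT).
      exact: leq_add H0 (leqnn n).
    by rewrite leqNgt ltN.
  have HT: n <= #|phi setT| by apply: leq_trans ch; rewrite leq_addl.
  rewrite HT => <-.
  by case: (c x).
Qed.

Definition rk d (P : finPOrderType d) (x : P) : nat :=
  \max_(S : {set P} | is_chain S && [forall y in S, (y <= x)%O]) #|S|.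

Lemma chain1 d (P : finPOrderType d) (x : P) :
  is_chain [set x] && [forall y in [set x], (y <= x)%O].
Proof.
apply/andP; split.
  apply/forall_inP=> u; rewrite inE => /eqP->.
  by apply/forall_inP=> v; rewrite inE => /eqP->; rewrite lexx.
by apply/forall_inP=> u; rewrite inE => /eqP->.
Qed.

Lemma rk_ex d (P : finPOrderType d) (x : P) :
  exists2 S : {set P}, is_chain S && [forall y in S, (y <= x)%O] & rk x = #|S|.
Proof.
have: 0 < #|[pred S : {set P} | is_chain S && [forall y in S, (y <= x)%O]]|.
  by apply/card_gt0P; exists [set x]; rewrite inE chain1.
move/(eq_bigmax_cond (fun S : {set P} => #|S|)) => [S HS HE].
by exists S => //; rewrite /rk HE.
Qed.

Lemma rk_pos d (P : finPOrderType d) (x : P) : 0 < rk x.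
Proof.
rewrite /rk; apply: (leq_trans _ (@leq_bigmax_cond _ (fun S : {set P} => is_chain S && [forall y in S, (y <= x)%O]) (fun S : {set P} => #|S|) _ (chain1 x))).
by rewrite cards1.
Qed.

Lemma rk_height d (P : finPOrderType d) (x : P) : rk x <= height P.
Proof.
have [S /andP[HS _] ->] := rk_ex x.
exact: (@leq_bigmax_cond _ (fun S : {set P} => is_chain S) (fun S : {set P} => #|S|) _ HS).
Qed.

Lemma rk_lt d (P : finPOrderType d) (x y : P) : (x < y)%O -> rk x < rk y.
Proof.
move=> xy.
have [S /andP[HS Hx] ->] := rk_ex x.
have yS: y \notin S.
  by apply/negP=> /(forall_inP Hx); rewrite lt_geF.
have lty : forall u, u \in S -> (u <= y)%O.
  by move=> u /(forall_inP Hx) ux; apply: le_trans ux (ltW xy).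
have H: is_chain (y |: S) && [forall u in y |: S, (u <= y)%O].
  apply/andP; split.
    apply/forall_inP=> u; rewrite in_setU1 => /orP[/eqP->|uS].
      apply/forall_inP=> v; rewrite in_setU1 => /orP[/eqP->|vS].
        by rewrite lexx.
      by rewrite lty ?orbT.
    apply/forall_inP=> v; rewrite in_setU1 => /orP[/eqP->|vS].
      by rewrite lty.
    exact: (forall_inP (forall_inP HS u uS) v vS).
  by apply/forall_inP=> u; rewrite in_setU1 => /orP[/eqP->|/lty].
rewrite /rk; apply: (leq_trans _ (@leq_bigmax_cond _ (fun S : {set P} => is_chain S && [forall u in S, (u <= y)%O]) (fun S : {set P} => #|S|) _ H)).
by rewrite cardsU1 yS.
Qed.

Lemma upper_bound d (P : finPOrderType d) (c : P -> bool) n D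
  (phi0 : P -> {set 'I_D}) N (i0 : 'I_N) :
  induced_copy phi0 -> height P * n + D <= N -> EH_property c n N.
Proof.
move=> [inj0 sub0] hN col.
pose g (j : 'I_D) : 'I_N := insubd i0 (val j).
pose L (x : P) := (rk x).-1.
pose m (x : P) := D + L x * n.
pose f (x : P) (j : 'I_n) : 'I_N := insubd i0 (m x + val j).
pose low (x : P) := [set i : 'I_N | D <= i < m x].
pose Z (x : P) := g @: phi0 x :|: low x.
pose psi (x : P) (A : {set 'I_n}) := Z x :|: f x @: A.
have mxn : forall x, m x + n <= N.
  move=> x; apply: leq_trans hN; rewrite /m -addnA addnC leq_add2r -mulSnr.
  by rewrite leq_mul2r /L prednK ?rk_pos // rk_height orbT.
have vg : forall j, val (g j) = val j.
  have DN : D <= N by apply: leq_trans hN; rewrite leq_addl.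
  by move=> j; rewrite val_insubd (leq_trans (ltn_ord j) DN).
have vf : forall x j, val (f x j) = m x + val j.
  move=> x j; rewrite val_insubd (leq_trans _ (mxn x)) //.
  by rewrite ltn_add2l ltn_ord.
have Dm : forall x, D <= m x by move=> x; rewrite leq_addr.
have ginj : injective g by move=> j k /(congr1 val); rewrite !vg => /val_inj.
have finj : forall x, injective (f x).
  by move=> x j k /(congr1 val); rewrite !vf => /addnI /val_inj.
have gD : forall (S : {set 'I_D}) i, i \in g @: S -> val i < D.
  by move=> S i /imsetP [j _ ->]; rewrite vg ltn_ord.
have fm : forall x (A : {set 'I_n}) i, i \in f x @: A -> m x <= val i < m x + n.
  by move=> x A i /imsetP [j _ ->]; rewrite vf leq_addr ltn_add2l ltn_ord.
have cube : forall x, cube_copy (psi x).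
  move=> x; apply: cube_copy_shift => // j; rewrite /Z in_setU negb_or.
  apply/andP; split.
    by apply/negP=> /gD; rewrite vf ltnNge (leq_trans (Dm x)) // leq_addr.
  by rewrite inE vf ltnNge leq_addr andbF.
have tr : forall x A j, (g j \in psi x A) = (j \in phi0 x).
  move=> x A j; rewrite /psi /Z !in_setU (mem_imset _ _ ginj).
  have -> : (g j \in low x) = false by rewrite inE vg leqNgt ltn_ord.
  case: (boolP (g j \in f x @: A)) => [/fm /andP[H _]|]; last by rewrite !orbF.
  by move: H; rewrite vg leqNgt (leq_trans (ltn_ord j) (Dm x)).
case: (boolP [forall x, [exists A, col (psi x A) == c x]]) => [/forallP H|]; last first.
  move/forallPn => [x /existsPn H]; right; exists (~~ c x), (psi x); split => //.
  by move=> A; move: (H A); case: (col _); case: (c x).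
left.
pose A x := if [pick B | col (psi x B) == c x] is Some B then B else set0.
have hA : forall x, col (psi x (A x)) = c x.
  move=> x; rewrite /A; case: pickP => [B /eqP //|H0].
  by have /existsP [B] := H x; rewrite H0.
have ord : forall x y, (x <= y)%O = (psi x (A x) \subset psi y (A y)).
  move=> x y; apply/idP/idP => [xy|sxy]; last first.
    rewrite sub0; apply/subsetP=> j jx.
    by rewrite -(tr y (A y)); apply: (subsetP sxy); rewrite tr.
  move: xy; rewrite le_eqVlt => /orP[/eqP->|xy]; first exact: subxx.
  have Lxy : L x < L y.
    by rewrite /L -ltnS !prednK ?rk_pos // rk_lt.
  have mxy : m x + n <= m y.
    by rewrite /m -addnA leq_add2l -mulSnr leq_mul2r Lxy orbT.
  have s0 : phi0 x \subset phi0 y by rewrite -sub0 ltW.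
  apply/subsetP=> i; rewrite /psi /Z !in_setU => /orP[/orP[Hg|Hl]|Hf].
  - by rewrite (subsetP (imsetS g s0) _ Hg).
  - move: Hl; rewrite !inE => /andP[H1 H2].
    by rewrite H1 (leq_trans H2 (leq_trans (leq_addr n _) mxy)) orbT.
  - have /andP[H1 H2] := fm _ _ _ Hf.
    by rewrite inE (leq_trans (Dm x) H1) (leq_trans H2 mxy) orbT.
exists (fun x => psi x (A x)); split => //; split => // x y exy.
by apply/le_anti; rewrite !ord exy subxx.
Qed.

Theorem theorem1 (d : Order.disp_t) (P : finPOrderType d) (c : P -> bool)
  (n D : nat) :
  diverse c -> 0 < n -> is_dim2 P D ->
  exists R : nat, is_EH_number c n R /\ 2 * n <= R <= height P * n + D.
Proof.
move=> dv n0 [[phi0 hphi] _].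
have hpos : 0 < height P * n + D.
  case: dv => x _; rewrite addn_gt0 muln_gt0 n0 andbT.
  by rewrite (leq_trans (rk_pos x) (rk_height x)).
have EH := upper_bound c (Ordinal hpos) hphi (leqnn _).
have [R [HR Rmin]] := min_exists EH.
exists R; split; first by split.
rewrite Rmin // andbT leqNgt; apply/negP => lt.
exact: (lower_bound dv lt HR).
Qed.
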